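(* Let $N=\{1,\dots,n\}$, let $F:2^N\to\mathbb{R}$ be quasi-submodular, and run the minimization procedure (described in the context) from an arbitrary $X_0\subseteq N$. Then for every iteration $t$ other than the last one (i.e., every $t$ with $X_{t+1}\neq X_t$), $F(X_{t+1})<F(X_t)$.
   Context: For $A\subseteq N$ and $i\in N$, write $A+i=A\cup\{i\}$, $A-i=A\setminus\{i\}$, and $F(i\mid A)=F(A+i)-F(A)$. $F$ is quasi-submodular if for all $X,Y\subseteq N$ both hold: $F(X\cap Y)\ge F(X)\Rightarrow F(Y)\ge F(X\cup Y)$, and $F(X\cap Y)>F(X)\Rightarrow F(Y)>F(X\cup Y)$. Minimization procedure: given $X_0\subseteq N$, for $t=0,1,2,\dots$: let $U_t=\{u\in N\setminus X_t: F(u\mid X_t)<0\}$ and $Y_t=X_t\cup U_t$; let $D_t=\{d\in X_t: F(d\mid Y_t-d)>0\}$ and $X_{t+1}=Y_t\setminus D_t$; if $X_{t+1}=X_t$, stop and output $X_t$; otherwise continue with $t+1$. *)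

(* Defs.v *)
From mathcomp Require Import all_boot all_order all_algebra.
Set Implicit Arguments. Unset Strict Implicit. Unset Printing Implicit Defensive.
Import Order.TTheory GRing.Theory Num.Theory.
Local Open Scope ring_scope.

(* Ground set N = {1..n} is modelled as 'I_n; subsets as {set 'I_n}. *)

Definition marg (n : nat) (R : realFieldType) (F : {set 'I_n} -> R)
  (i : 'I_n) (A : {set 'I_n}) : R := F (i |: A) - F A.

Definition quasi_submodular (n : nat) (R : realFieldType) (F : {set 'I_n} -> R) : Prop :=
  forall X Y : {set 'I_n},
    (F X <= F (X :&: Y) -> F (X :|: Y) <= F Y) /\
    (F X < F (X :&: Y) -> F (X :|: Y) < F Y).

Definition U_step (n : nat) (R : realFieldType) (F : {set 'I_n} -> R) (X : {set 'I_n}) :=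
  [set u in ~: X | marg F u X < 0].
Definition Y_step (n : nat) (R : realFieldType) (F : {set 'I_n} -> R) (X : {set 'I_n}) :=
  X :|: U_step F X.
Definition D_step (n : nat) (R : realFieldType) (F : {set 'I_n} -> R) (X : {set 'I_n}) :=
  [set d in X | 0 < marg F d (Y_step F X :\ d)].
Definition next_step (n : nat) (R : realFieldType) (F : {set 'I_n} -> R) (X : {set 'I_n}) :=
  Y_step F X :\: D_step F X.

(* X_t : the t-th iterate starting from X0 (the procedure stops at the first
   t with X_{t+1} = X_t, after which the iterates are constant) *)
Definition iterate (n : nat) (R : realFieldType) (F : {set 'I_n} -> R)
  (X0 : {set 'I_n}) (t : nat) : {set 'I_n} := iter t (next_step F) X0.

(* Main.v *)
Require Import Defs.
From mathcomp Require Import all_boot all_order all_algebra.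
Import Order.TTheory GRing.Theory Num.Theory.
Local Open Scope ring_scope.

Lemma add_chain (n : nat) (R : realFieldType) (F : {set 'I_n} -> R) (X U : {set 'I_n}) :
  quasi_submodular F -> U \subset ~: X ->
  (forall u, u \in U -> F (u |: X) < F X) ->
  forall S : {set 'I_n}, S \subset U -> F (X :|: S) <= F X /\ (S != set0 -> F (X :|: S) < F X).
Proof.
move=> qs sUX hU.
suff H: forall k (S : {set 'I_n}), #|S| = k -> S \subset U ->
  F (X :|: S) <= F X /\ (S != set0 -> F (X :|: S) < F X) by move=> S; apply: H.
elim=> [|k IH] S hk sSU.
  move/eqP: hk; rewrite cards_eq0 => /eqP ->; rewrite setU0; split=> //.
  by rewrite eqxx.
have: S != set0 by rewrite -card_gt0 hk.
case/set0Pn=> u uS.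
have uU : u \in U by apply: (subsetP sSU).
have uX : u \notin X by have := subsetP sUX u uU; rewrite inE.
set S' := S :\ u.
have hk' : #|S'| = k by move: hk; rewrite (cardsD1 u S) uS add1n => -[].
have sS'U : S' \subset U by apply: subset_trans sSU; apply: subsetDl.
have [IH1 _] := IH S' hk' sS'U.
have [_ q2] := qs (u |: X) (X :|: S').
have EI : (u |: X) :&: (X :|: S') = X.
  apply/setP=> x; rewrite !inE.
  case: (eqVneq x u) => [->|_]; first by rewrite (negbTE uX).
  by case: (x \in X); case: (x \in S).
have EU : (u |: X) :|: (X :|: S') = X :|: S.
  apply/setP=> x; rewrite !inE.
  case: (eqVneq x u) => [->|_]; first by rewrite ?(negbTE uX) ?uS ?dS ?dY ?orbT.
  by case: (x \in X); case: (x \in S).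
rewrite EI EU in q2.
have lt := q2 (hU u uU).
split; last move=> _; [apply: ltW|]; exact: lt_le_trans lt IH1.
Qed.

Lemma rem_chain (n : nat) (R : realFieldType) (F : {set 'I_n} -> R) (Y D : {set 'I_n}) :
  quasi_submodular F -> D \subset Y ->
  (forall d, d \in D -> F (Y :\ d) < F Y) ->
  forall S : {set 'I_n}, S \subset D -> F (Y :\: S) <= F Y /\ (S != set0 -> F (Y :\: S) < F Y).
Proof.
move=> qs sDY hD.
suff H: forall k (S : {set 'I_n}), #|S| = k -> S \subset D ->
  F (Y :\: S) <= F Y /\ (S != set0 -> F (Y :\: S) < F Y) by move=> S; apply: H.
elim=> [|k IH] S hk sSD.
  move/eqP: hk; rewrite cards_eq0 => /eqP ->; rewrite setD0; split=> //.
  by rewrite eqxx.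
have: S != set0 by rewrite -card_gt0 hk.
case/set0Pn=> d dS.
have dD : d \in D by apply: (subsetP sSD).
have dY : d \in Y by apply: (subsetP sDY).
set S' := S :\ d.
have hk' : #|S'| = k by move: hk; rewrite (cardsD1 d S) dS add1n => -[].
have sS'D : S' \subset D by apply: subset_trans sSD; apply: subsetDl.
have [IH1 _] := IH S' hk' sS'D.
have [q1 _] := qs (Y :\: S') (Y :\ d).
have EI : (Y :\: S') :&: (Y :\ d) = Y :\: S.
  apply/setP=> x; rewrite !inE.
  case: (eqVneq x d) => [->|_]; first by rewrite ?(negbTE uX) ?uS ?dS ?dY ?orbT.
  by case: (x \in S); case: (x \in Y).
have EU : (Y :\: S') :|: (Y :\ d) = Y.
  apply/setP=> x; rewrite !inE.
  case: (eqVneq x d) => [->|_]; first by rewrite ?(negbTE uX) ?uS ?dS ?dY ?orbT.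
  by case: (x \in S); case: (x \in Y).
rewrite EI EU in q1.
have lt : F (Y :\: S) < F (Y :\: S').
  rewrite ltNge; apply/negP=> /q1; rewrite leNgt (hD d dD) //.
split; last move=> _; [apply: ltW|]; exact: lt_le_trans lt IH1.
Qed.

Theorem lemma1 (n : nat) (R : realFieldType) (F : {set 'I_n} -> R)
  (X0 : {set 'I_n}) (t : nat) :
  quasi_submodular F ->
  iterate F X0 t.+1 != iterate F X0 t ->
  F (iterate F X0 t.+1) < F (iterate F X0 t).
Proof.
move=> qs; rewrite /iterate iterS.
set X := iter t (next_step F) X0.
rewrite /next_step.
set U := U_step F X.
set Y := Y_step F X.
set D := D_step F X.
have sUX : U \subset ~: X by apply/subsetP=> u; rewrite inE => /andP[].
have hU : forall u, u \in U -> F (u |: X) < F X.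
  by move=> u; rewrite inE /marg subr_lt0 => /andP[].
have [A1 A2] := @add_chain _ _ F _ _ qs sUX hU _ (subxx U).
have sDY : D \subset Y.
  apply/subsetP=> d; rewrite inE => /andP[dX _].
  by rewrite /Y /Y_step inE dX.
have hD : forall d, d \in D -> F (Y :\ d) < F Y.
  move=> d dD; have dY := subsetP sDY d dD.
  by move: dD; rewrite inE /marg subr_gt0 -/Y setD1K // => /andP[].
have [B1 B2] := @rem_chain _ _ F _ _ qs sDY hD _ (subxx D).
move=> ne.
have EY : Y = X :|: U by [].
have [U0|Un] := eqVneq U set0.
  have [D0|Dn] := eqVneq D set0.
    by move: ne; rewrite EY U0 D0 setU0 setD0 eqxx.
  by apply: lt_le_trans (B2 Dn) _; rewrite EY U0 setU0.
by apply: le_lt_trans B1 _; rewrite EY; exact: A2 Un.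
Qed.
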